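(* For every integer $n\ge1$, $$|\mathbb H_n^\circ|=n^4-(n-1)^4,\qquad |\mathbb H_n^{i,j}|=\frac{4!}{i!\,j!\,(4-i-j)!}(n-1)^{4-i-j}\quad\text{for all integers } 0<i,j \text{ with } i+j\le4 .$$
   Context: Let $\mathbb Z^4_H=\{\mathbf k\in\mathbb Z^4: k_1+k_2+k_3+k_4=0\}$ and $\mathbb H=\{\mathbf k\in\mathbb Z^4_H: k_1\equiv k_2\equiv k_3\equiv k_4\pmod 4\}$. Let $\mathbb H_n^\circ=\{\mathbf k\in\mathbb H: |k_i-k_l|<4n \text{ for all } i,l\}$. For $0<i,j$ with $i+j\le4$, let $\mathbb H_n^{i,j}$ be the set of $\mathbf k\in\mathbb H$ with $\max_lk_l-\min_lk_l=4n$ such that exactly $i$ coordinates of $\mathbf k$ equal $\max_lk_l$ and exactly $j$ coordinates equal $\min_lk_l$ (equivalently, $\mathbf k/(4n)$ lies on the boundary part $B^{i,j}$ of the rhombic dodecahedron $\{\mathbf t: t_1+\dots+t_4=0,\ |t_i-t_l|\le 1\}$ where exactly $i$ coordinates attain the maximum and $j$ the minimum, the two differing by $1$). *)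

(* Defs.v *)
From HB Require Import structures.
From mathcomp Require Import all_boot all_order all_algebra.
From mathcomp Require Import boolp classical_sets cardinality.
Set Implicit Arguments. Unset Strict Implicit. Unset Printing Implicit Defensive.
Import Order.TTheory GRing.Theory Num.Theory.
Local Open Scope ring_scope.

Definition pt := {ffun 'I_4 -> int}.

Definition inZ4H (k : pt) : bool := \sum_(i < 4) k i == 0.

Definition inH (k : pt) : bool :=
  inZ4H k && [forall i : 'I_4, forall l : 'I_4, (4 %| k i - k l)%Z].

Definition maxk (k : pt) : int := \big[Num.max/k ord0]_(l < 4) k l.
Definition mink (k : pt) : int := \big[Num.min/k ord0]_(l < 4) k l.

Definition Hcirc (n : nat) : set pt :=
  [set k | inH k /\ forall i l : 'I_4, `|k i - k l| < 4 * n%:Z].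

Definition Hij (n i j : nat) : set pt :=
  [set k | [/\ inH k, maxk k - mink k = 4 * n%:Z,
              #|[set l : 'I_4 | k l == maxk k]| = i
            & #|[set l : 'I_4 | k l == mink k]| = j]].

(* Main.v *)
Require Import Defs.
From HB Require Import structures.
From mathcomp Require Import all_boot all_order all_algebra.
From mathcomp Require Import boolp classical_sets cardinality.
From mathcomp Require Import zify ring lra.
Import Order.TTheory GRing.Theory Num.Theory.
Set Implicit Arguments. Unset Strict Implicit. Unset Printing Implicit Defensive.
Lemma prod_card_fam (I : finType) (G : I -> nat) :
  foldr muln 1 [seq G l | l : I] = \prod_(l : I) G l.
Proof. by rewrite foldrE big_map big_enum. Qed.

Lemma card_two (T : finType) (x y : T) : x != y ->
  #|[pred t | (t != x) && (t != y)]| = #|T| - 2.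
Proof.
move=> xy.
have := cardC1 x; rewrite (cardD1 y) inE eq_sym xy /= => h.
have -> : #|[pred t | (t != x) && (t != y)]| = #|[predD1 predC1 x & y]|.
  by apply: eq_card => t; rewrite !inE andbC.
move: h; case: #|T| => [|n] /=; rewrite add1n => hh //; by rewrite -hh !subSS subn0.
Qed.

Lemma fam_card (I T : finType) (x y : T) (A B : {set I}) : x != y -> [disjoint A & B] ->
  #|[pred f : {ffun I -> T} | ([set l | f l == x] == A) && ([set l | f l == y] == B)]|
  = (#|T| - 2) ^ #|~: (A :|: B)|.
Proof.
move=> xy dAB.
pose F := fun l => if l \in A then pred1 x else if l \in B then pred1 y
                   else [pred t | (t != x) && (t != y)].
have dis : forall l, l \in A -> l \in B -> False.
  move=> l lA lB; move/disjoint_setI0: dAB => /setP /(_ l).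
  by rewrite !inE lA lB.
rewrite (eq_card (B := family F)); last first.
  move=> f; rewrite !inE; apply/andP/familyP => [[/eqP eA /eqP eB] l | H].
    rewrite /F -eA -eB !inE.
    case: eqP => [-> | nx]; first by rewrite inE.
    case: eqP => [-> | ny]; first by rewrite inE.
    by rewrite inE; apply/andP; split; apply/eqP.
  split; apply/eqP/setP => l; rewrite inE; have := H l; rewrite /F.
    case lA: (l \in A); first by rewrite inE => ->.
    case lB: (l \in B); rewrite !inE.
      by move/eqP->; rewrite eq_sym (negbTE xy).
    by case/andP=> /negbTE ->.
  case lA: (l \in A).
    rewrite inE => /eqP ->; rewrite (negbTE xy); case lB: (l \in B) => //.
    by case: (dis l).
  case lB: (l \in B); first by rewrite inE => ->.
  by rewrite !inE => /andP[_ /negbTE ->].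
rewrite card_family prod_card_fam -prod_nat_const.
rewrite [RHS]big_mkcond /=; apply: eq_bigr => l _.
rewrite /F !inE; case: (l \in A) => /=; first by rewrite card1.
case: (l \in B) => /=; first by rewrite card1.
exact: card_two.
Qed.

Lemma count_ij (I T : finType) (x y : T) (i j : nat) : x != y ->
  #|[pred f : {ffun I -> T} | (#|[set l | f l == x]| == i) && (#|[set l | f l == y]| == j)]|
  = 'C(#|I|, i) * ('C(#|I| - i, j) * (#|T| - 2) ^ (#|I| - i - j)).
Proof.
move=> xy.
rewrite -sum1_card.
rewrite (partition_big (fun f : {ffun I -> T} => [set l | f l == x]) (fun A => #|A| == i)) /=;
  last by move=> f /andP[].
rewrite (eq_bigr (fun A => 'C(#|I| - i, j) * (#|T| - 2) ^ (#|I| - i - j))).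
  rewrite sum_nat_const; congr (_ * _).
  rewrite -(card_draws I i); by apply: eq_card => A; rewrite !inE.
move=> A /eqP cA.
rewrite (partition_big (fun f : {ffun I -> T} => [set l | f l == y])
   (fun B => (B \subset ~: A) && (#|B| == j))) /=; last first.
  move=> f; rewrite !inE => /andP[/andP[_ ->] /eqP <-]; rewrite andbT.
  apply/fintype.subsetP => l; rewrite !inE => /eqP ->; by rewrite eq_sym.
rewrite (eq_bigr (fun B => (#|T| - 2) ^ (#|I| - i - j))).
  rewrite sum_nat_const; congr (_ * _).
  have hc : #|~: A| = #|I| - i by have := cardsC A; rewrite cA => <-; rewrite addKn.
  rewrite -hc -cards_draws; by apply: eq_card => B; rewrite !inE.
move=> B /andP[sB /eqP cB].
have dAB : [disjoint A & B].
  by rewrite disjoint_sym finset.disjoints_subset.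
rewrite -[LHS](@eq_bigl _ _ _ _ _ [pred f : {ffun I -> T} | ([set l | f l == x] == A) && ([set l | f l == y] == B)]); last first.
  move=> f; rewrite !inE.
  apply/idP/idP => [/andP[/eqP eA /eqP eB] | /andP[/andP[_ ->] ->] //].
  by rewrite eA eB cA cB !eqxx.
rewrite sum1_card fam_card //.
congr (_ ^ _).
have := cardsC (A :|: B); rewrite cardsU.
have -> : A :&: B = finset.set0 by apply/disjoint_setI0.
rewrite cards0 subn0 cA cB => <-. lia.
Qed.

Lemma count_circ (I T : finType) (x : T) :
  #|[pred f : {ffun I -> T} | [exists l, f l == x]]| = #|T| ^ #|I| - (#|T|.-1) ^ #|I|.
Proof.
have := cardC [pred f : {ffun I -> T} | [exists l, f l == x]].
rewrite card_ffun -(cardC1 x) -card_ffun_on.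
have -> : #|[predC [pred f : {ffun I -> T} | [exists l, f l == x]]]| = #|ffun_on_mem I (mem (predC1 x))|.
  apply: eq_card => f; rewrite !inE negb_exists; apply/forallP/ffun_onP => H l.
    by rewrite !inE H.
  by have := H l; rewrite !inE.
move=> <-; by rewrite card_ffun_on addnK.
Qed.

Local Open Scope classical_set_scope.
Lemma card_img_fin (T : finType) (P : {pred T}) U (g : T -> U) (X : set U) :
  {in P &, injective g} -> X = g @` [set x | x \in P] -> (X #= `I_#|P|)%card.
Proof.
move=> ginj ->.
pose h := fun i : 'I_#|P| => g (enum_val i).
have hX : g @` [set x | x \in P] = h @` setT.
  apply/seteqP; split => u /=.
    case=> x0 Px0 <-; exists (enum_rank_in Px0 x0) => //.
    by rewrite /h enum_rankK_in.
  case=> i _ <-; exists (enum_val i) => //=; exact: enum_valP.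
have hinj : {in setT &, injective h}.
  move=> a b _ _ /ginj; rewrite !enum_valP => /(_ isT isT); exact: enum_val_inj.
rewrite hX; apply: card_eq_trans (inj_card_eq hinj) _.
rewrite card_eq_sym; exact: card_II.
Qed.
Local Close Scope classical_set_scope.
Local Open Scope ring_scope.
Definition emb (x : 'I_4 -> int) : pt := [ffun l => 4 * x l - \sum_(j < 4) x j].

Lemma embE x l : emb x l = 4 * x l - \sum_(j < 4) x j.
Proof. by rewrite ffunE. Qed.

Lemma embB x i l : emb x i - emb x l = 4 * (x i - x l).
Proof. rewrite !embE; ring. Qed.

Lemma emb_inH x : inH (emb x).
Proof.
apply/andP; split.
  rewrite /inZ4H; apply/eqP.
  under eq_bigr do rewrite embE.
  rewrite sumrB -mulr_sumr sumr_const card_ord -[(\sum_(j < 4) x j) *+ 4]mulr_natr; ring.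
apply/forallP => i; apply/forallP => l; rewrite embB.
by apply: dvdz_mulr; rewrite dvdzz.
Qed.

Lemma mink_le (k : pt) l : mink k <= k l.
Proof. exact: bigmin_le. Qed.
Lemma maxk_ge (k : pt) l : k l <= maxk k.
Proof. exact: le_bigmax. Qed.
Lemma mink_ex (k : pt) : exists l, mink k = k l.
Proof.
rewrite /mink; elim/big_ind: _ => [|a b [la ->] [lb ->]|l _]; try by eexists.
by rewrite minEle; case: ifP => _; eexists.
Qed.
Lemma maxk_ex (k : pt) : exists l, maxk k = k l.
Proof.
rewrite /maxk; elim/big_ind: _ => [|a b [la ->] [lb ->]|l _]; try by eexists.
by rewrite maxEle; case: ifP => _; eexists.
Qed.

Lemma emb_inj (x y : 'I_4 -> int) : (forall l, 0 <= x l) -> (forall l, 0 <= y l) ->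
  (exists l, x l = 0) -> (exists l, y l = 0) -> emb x = emb y -> forall l, x l = y l.
Proof.
move=> x0 y0 [l0 hx] [l1 hy] e i.
have d : forall a b, x a - x b = y a - y b :> int.
  move=> a b; have := embB x a b; rewrite e embB => h.
  have : 4 * (x a - x b - (y a - y b)) = 0 by rewrite mulrBr -h subrr.
  by move/eqP; rewrite mulf_eq0 /= subr_eq0 => /eqP.
have := d i l0; have := d l1 l0; have := x0 l1; have := y0 l0; clear e d x0 y0; lia.
Qed.

Lemma emb_surj (k : pt) l0 : inH k -> (forall l, k l0 <= k l) ->
  exists x : 'I_4 -> int, [/\ forall l, 4 * x l = k l - k l0, x l0 = 0 & emb x = k].
Proof.
case/andP=> /eqP s0 /forallP hd hmin.
pose x l := ((k l - k l0) %/ 4)%Z.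
have hx : forall l, 4 * x l = k l - k l0.
  move=> l; rewrite mulrC divzK //; exact: (forallP (hd l) l0).
exists x; split => //.
  by have := hx l0; rewrite subrr => /eqP; rewrite mulf_eq0 /= => /eqP.
have hs : 4 * \sum_(j < 4) x j = - 4 * k l0 :> int.
  rewrite mulr_sumr (eq_bigr _ (fun j _ => hx j)) sumrB s0 sumr_const card_ord.
  rewrite -mulr_natr; ring.
have hS : \sum_(j < 4) x j = - k l0 by apply: (@mulfI _ 4) => //; rewrite hs; ring.
apply/ffunP => l; rewrite embE hx hS; ring.
Qed.


Lemma emb_ext (x y : 'I_4 -> int) : (forall l, x l = y l) -> emb x = emb y.
Proof.
move=> h; apply/ffunP => l; rewrite !embE h; congr (_ - _); exact: eq_bigr.
Qed.

Lemma extr_sets (x : 'I_4 -> int) (N : int) l0 l1 :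
  (forall l, 0 <= x l <= N) -> x l0 = 0 -> x l1 = N ->
  [/\ maxk (emb x) - mink (emb x) = 4 * N,
      forall l, (emb x l == maxk (emb x)) = (x l == N)
    & forall l, (emb x l == mink (emb x)) = (x l == 0)].
Proof.
move=> hb h0 h1.
have hmin : mink (emb x) = emb x l0.
  have [l el] := mink_ex (emb x).
  apply/eqP; rewrite eq_le mink_le el.
  have := embB x l0 l; have := hb l; rewrite h0 => /andP[hl _] e.
  rewrite -subr_le0 e; lia.
have hmax : maxk (emb x) = emb x l1.
  have [l el] := maxk_ex (emb x).
  apply/eqP; rewrite eq_le maxk_ge el andbT.
  have := embB x l l1; have := hb l; rewrite h1 => /andP[_ hl] e.
  rewrite -subr_le0 e; lia.
split.
- by rewrite hmax hmin embB h0 h1 subr0.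
- move=> l; rewrite hmax -subr_eq0 embB mulf_eq0 /= subr_eq0 h1 //.
- move=> l; rewrite hmin -subr_eq0 embB mulf_eq0 /= subr_eq0 h0 //.
Qed.

Definition xf N (f : {ffun 'I_4 -> 'I_N}) : 'I_4 -> int := fun l => (f l : nat)%:Z.

Lemma g_inj N (f1 f2 : {ffun 'I_4 -> 'I_N}) :
  (exists l, (f1 l : nat) = 0%N) -> (exists l, (f2 l : nat) = 0%N) ->
  emb (xf f1) = emb (xf f2) -> f1 = f2.
Proof.
move=> [l1 h1] [l2 h2] e.
have h : forall l, xf f1 l = xf f2 l.
  apply: emb_inj e => [l|l||]; rewrite /xf //.
    by exists l1; rewrite h1.
  by exists l2; rewrite h2.
apply/ffunP => l; apply/val_inj.
by have := h l; rewrite /xf; case.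
Qed.

Lemma surj_f (n : nat) (x : 'I_4 -> int) : (forall l, 0 <= x l <= n%:Z) ->
  exists f : {ffun 'I_4 -> 'I_n.+1}, forall l, xf f l = x l.
Proof.
move=> hb; exists [ffun l => inord (absz (x l))] => l.
have := hb l => /andP[h1 h2].
rewrite /xf ffunE inordK; first by rewrite abszE ger0_norm.
lia.
Qed.

Lemma setmax m (f : {ffun 'I_4 -> 'I_m.+2}) (x : 'I_4 -> int) :
  (forall l, xf f l = x l) ->
  [set l | f l == ord_max] = finset.finset (fun l => x l == m.+1%:Z) /\
  [set l | f l == ord0] = finset.finset (fun l => x l == 0).
Proof.
move=> hf; split; apply/setP => l; rewrite !inE -hf /xf -val_eqE /=.
  by rewrite eqz_nat.
by rewrite eqz_nat.
Qed.

Local Open Scope classical_set_scope.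
Lemma Hcirc_eq m : Hcirc m.+1 = (fun f => emb (xf f)) @`
  [set f | f \in [pred f : {ffun 'I_4 -> 'I_m.+1} | [exists l, f l == ord0]]].
Proof.
apply/seteqP; split.
- move=> k [hH hlt].
  have [l0 e0] := mink_ex k.
  have hmin : forall l, k l0 <= k l by move=> l; rewrite -e0 mink_le.
  have [x [hx x0 ex]] := emb_surj hH hmin.
  have hb : forall l, 0 <= x l <= m%:Z.
    move=> l; have := hx l; have := hmin l; have := hlt l l0.
    rewrite ltr_norml => /andP[_ h1] h2 h3; apply/andP; split; lia.
  have [f hf] := surj_f hb.
  exists f => /=.
    apply/existsP; exists l0; apply/eqP/val_inj => /=.
    by have := hf l0; rewrite x0 /xf; case.
  by rewrite (emb_ext hf) ex.
- move=> _ [f /= hf <-]; split; first exact: emb_inH.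
  move=> i l; rewrite embB /xf ltr_norml.
  have := ltn_ord (f i); have := ltn_ord (f l) => h1 h2.
  apply/andP; split; lia.
Qed.

Lemma Hij_eq m i j : (0 < i)%N -> (0 < j)%N -> Hij m.+1 i j = (fun f => emb (xf f)) @`
  [set f | f \in [pred f : {ffun 'I_4 -> 'I_m.+2} |
     (#|[set l | f l == ord_max]%SET| == i) && (#|[set l | f l == ord0]%SET| == j)]].
Proof.
move=> i0 j0; apply/seteqP; split.
- move=> k [hH hd hci hcj].
  have [l0 e0] := mink_ex k.
  have [l1 e1] := maxk_ex k.
  have hmin : forall l, k l0 <= k l by move=> l; rewrite -e0 mink_le.
  have [x [hx x0 ex]] := emb_surj hH hmin.
  have hb : forall l, 0 <= x l <= m.+1%:Z.
    move=> l; have := hx l; have := hmin l; have := maxk_ge k l.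
    rewrite e1; move: hd; rewrite e1 e0 => h1 h2 h3 h4; apply/andP; split; lia.
  have x1 : x l1 = m.+1%:Z.
    have := hx l1; move: hd; rewrite e1 e0 => h1 h2; lia.
  have [f hf] := surj_f hb.
  exists f => /=; last by rewrite (emb_ext hf) ex.
  have [_ emax emin] := extr_sets hb x0 x1.
  have [sa sb] := setmax hf.
  rewrite inE sa sb; apply/andP; split.
    rewrite -hci -ex; apply/eqP; apply: eq_card => l; rewrite !inE; by rewrite emax.
  rewrite -hcj -ex; apply/eqP; apply: eq_card => l; rewrite !inE; by rewrite emin.
- move=> _ [f /= /andP[/eqP hci /eqP hcj] <-].
  have [sa sb] := setmax (fun l => erefl (xf f l)).
  have hb : forall l, 0 <= xf f l <= m.+1%:Z.
    by move=> l; rewrite /xf lez_nat -ltnS ltn_ord.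
  have /card_gt0P [l0] : (0 < #|[set l | f l == ord0]%SET|)%N by rewrite hcj.
  rewrite inE => /eqP h0.
  have /card_gt0P [l1] : (0 < #|[set l | f l == ord_max]%SET|)%N by rewrite hci.
  rewrite inE => /eqP h1.
  have x0 : xf f l0 = 0 by rewrite /xf h0.
  have x1 : xf f l1 = m.+1%:Z by rewrite /xf h1.
  have [hd emax emin] := extr_sets hb x0 x1.
  split => //; first exact: emb_inH.
    rewrite -hci sa; apply: eq_card => l; by rewrite !inE emax.
  rewrite -hcj sb; apply: eq_card => l; by rewrite !inE emin.
Qed.

Theorem lemma3p13 (n : nat) : (1 <= n)%N ->
  (Hcirc n #= `I_(n ^ 4 - (n - 1) ^ 4))%card /\
  (forall i j : nat, (0 < i)%N -> (0 < j)%N -> (i + j <= 4)%N ->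
     (Hij n i j #= `I_(4`! %/ (i`! * j`! * (4 - i - j)`!) * (n - 1) ^ (4 - i - j)))%card).
Proof.
case: n => [//|m] _; split.
- have -> : (m.+1 ^ 4 - (m.+1 - 1) ^ 4)%N =
     #|[pred f : {ffun 'I_4 -> 'I_m.+1} | [exists l, f l == ord0]]|.
    by rewrite count_circ !card_ord subn1.
  rewrite Hcirc_eq; apply: card_img_fin => //.
  move=> f1 f2; rewrite !inE => /existsP[l1 /eqP h1] /existsP[l2 /eqP h2].
  apply: g_inj; [by exists l1; rewrite h1 | by exists l2; rewrite h2].
- move=> i j i0 j0 hij.
  have -> : (4`! %/ (i`! * j`! * (4 - i - j)`!) * (m.+1 - 1) ^ (4 - i - j))%N =
     #|[pred f : {ffun 'I_4 -> 'I_m.+2} |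
        (#|[set l | f l == ord_max]%SET| == i) && (#|[set l | f l == ord0]%SET| == j)]|.
    rewrite count_ij // !card_ord subn1 subSS subSS subn0.
    move: i0 j0 hij; case: i => [|[|[|[|i]]]]; case: j => [|[|[|[|j]]]] => //= _ _ h;
      try (exfalso; lia).
    1-3: by rewrite mulnA.
  rewrite Hij_eq //; apply: card_img_fin => //.
  move=> f1 f2; rewrite !inE => /andP[_ /eqP h1] /andP[_ /eqP h2].
  have /card_gt0P [l1] : (0 < #|[set l | f1 l == ord0]%SET|)%N by rewrite h1.
  have /card_gt0P [l2] : (0 < #|[set l | f2 l == ord0]%SET|)%N by rewrite h2.
  rewrite !inE => /eqP e2 /eqP e1.
  apply: g_inj; [by exists l1; rewrite e1 | by exists l2; rewrite e2].
Qed.
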